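(* If a finite simple graph $G$ contains an induced subgraph isomorphic to the path $P_k$ on $k$ vertices, where $k\ge 3$, then $\mathrm{mur}(G)\ge k-2$.
   Context: For a finite simple undirected graph $G$ on vertices $v_1,\dots,v_n$, let $A_G$ be its $(0,1)$-adjacency matrix, $D_G=\mathrm{diag}(d_1,\dots,d_n)$ with $d_i$ the degree of $v_i$, $I$ the $n\times n$ identity matrix and $J$ the $n\times n$ all-ones matrix. A universal adjacency matrix of $G$ is any matrix $\alpha A_G+\beta I+\gamma J+\delta D_G$ with real scalars $\alpha,\beta,\gamma,\delta$ and $\alpha\neq 0$. The minimum universal rank $\mathrm{mur}(G)$ is the minimum rank over all universal adjacency matrices of $G$. *)

(* Defs.v *)
From mathcomp Require Import all_boot all_order all_algebra.
Set Implicit Arguments. Unset Strict Implicit. Unset Printing Implicit Defensive.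
Import GRing.Theory Num.Theory.
Local Open Scope ring_scope.

Definition simple_graph (n : nat) (e : rel 'I_n) : Prop :=
  symmetric e /\ irreflexive e.

Definition deg (n : nat) (e : rel 'I_n) (i : 'I_n) : nat := #|[set j | e i j]|.

Definition adjmx (R : nzRingType) (n : nat) (e : rel 'I_n) : 'M[R]_n :=
  \matrix_(i, j) (e i j)%:R.

Definition degmx (R : nzRingType) (n : nat) (e : rel 'I_n) : 'M[R]_n :=
  \matrix_(i, j) ((i == j)%:R * (deg e i)%:R).

Definition onesmx (R : nzRingType) (n : nat) : 'M[R]_n := const_mx 1.

Definition univ_adj (R : nzRingType) (n : nat) (e : rel 'I_n)
  (alpha beta gamma delta : R) : 'M[R]_n :=
  alpha *: adjmx R e + beta *: 1%:M + gamma *: onesmx R n + delta *: degmx R e.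

(* mur(G) >= m : every universal adjacency matrix (alpha <> 0) has rank >= m,
   i.e. the minimum universal rank is at least m. *)
Definition mur_ge (R : fieldType) (n : nat) (e : rel 'I_n) (m : nat) : Prop :=
  forall alpha beta gamma delta : R, alpha != 0 ->
    (m <= \rank (univ_adj e alpha beta gamma delta))%N.

Definition has_induced_path (n : nat) (e : rel 'I_n) (k : nat) : Prop :=
  exists f : 'I_k -> 'I_n, injective f /\
    forall i j : 'I_k, e (f i) (f j) = ((i.+1 == j) || (j.+1 == i))%N.

(* Main.v *)
Require Import Defs.
From mathcomp Require Import all_boot all_order all_algebra.
Local Open Scope ring_scope.
From mathcomp Require Import ring zify.
Import GRing.Theory Num.Theory.

Lemma rank_const_le1 (R : fieldType) m n (a : R) :
  (\rank (const_mx a : 'M[R]_(m, n)) <= 1)%N.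
Proof.
have -> : (const_mx a : 'M[R]_(m, n)) = (const_mx a : 'cV[R]_m) *m (const_mx 1 : 'rV[R]_n).
  by apply/matrixP => i j; rewrite !mxE big_ord1 !mxE mulr1.
exact: leq_trans (mxrankM_maxl _ _) (rank_leq_col _).
Qed.

Theorem lemma6 (R : realFieldType) (n : nat) (e : rel 'I_n) (k : nat) :
  simple_graph e -> (3 <= k)%N -> has_induced_path e k ->
  mur_ge R e (k - 2).
Proof.
move=> [esym eirr] hk [f [finj fe]] a b g d a0.
case: k hk f finj fe => // m hk f finj fe.
set M := univ_adj e a b g d.
pose r : 'I_m -> 'I_n := fun i => f (widen_ord (leqnSn m) i).
pose c : 'I_m -> 'I_n := fun i => f (lift ord0 i).
pose S := mxsub r c M.
have HS : (\rank S <= \rank M)%N.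
  have -> : S = rowsub r 1%:M *m M *m colsub c 1%:M.
    by rewrite mulmx_colsub mul_rowsub_mx mulmx1 mul1mx; apply/matrixP => i j; rewrite !mxE.
  exact: leq_trans (mxrankM_maxl _ _) (mxrankM_maxr _ _).
pose N := S - const_mx g.
have Nij : forall i j : 'I_m, N i j = a * (e (r i) (c j))%:R + b * (r i == c j)%:R
     + d * ((r i == c j)%:R * (deg e (r i))%:R).
  move=> i j; rewrite !mxE /=; rewrite /r /c; set x := f _; set y := f _.
  by rewrite mulr_natr mulr1; ring.
have neq : forall i j : 'I_m, (i <= j)%N -> (r i == c j) = false.
  move=> i j hij; apply/negbTE/eqP => /finj /(congr1 val) /=; rewrite /bump /=.
  by rewrite add1n => h; move: hij; rewrite h ltnn.
have trig : is_trig_mx N.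
  apply/is_trig_mxP => i j hij; rewrite Nij neq ?(ltnW hij) // fe /= /bump /= !add1n.
  have -> : ((i.+1 == j.+1) || (j.+2 == i))%N = false.
    apply/negbTE; rewrite negb_or eqSS; apply/andP; split; apply/negP => /eqP h;
    move: hij; rewrite -h; lia.
  by rewrite !(mulr0, mul0r, addr0, add0r).
have detN : \det N = a ^+ m.
  rewrite det_trig //.
  rewrite (eq_bigr (fun _ => a)).
    by rewrite prodr_const card_ord.
  move=> i _; rewrite Nij neq // fe /= /bump /= !add1n eqxx /=.
  by rewrite !(mulr0, mul0r, addr0, add0r, mulr1).
have rN : \rank N = m.
  by apply: mxrank_unit; rewrite unitmxE detN unitfE expf_neq0.
have : (\rank N <= \rank S + 1)%N.
  by apply: leq_trans (mxrank_add _ _) _; rewrite mxrank_opp leq_add2l rank_const_le1.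
rewrite rN => h; rewrite subn2 /=.
by apply: leq_trans HS; rewrite -subn1 leq_subLR addnC.
Qed.
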